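(* If $T \in \mathcal{T}$ has order $n$, then $\gamma_{\rm gr}^t(T) = \frac{2}{3}(n+1)$.
   Context: A leaf is a vertex of degree $1$ and a support vertex is a vertex adjacent to a leaf. Operation $\mathcal{O}_1$: given a tree $T'$ and a support vertex $v$ of $T'$, add a new path $v_1v_2v_3$ (three new vertices) and the edge $vv_1$. The family $\mathcal{T}$ is the smallest family of trees containing the path $P_2$ and closed under operation $\mathcal{O}_1$. $N(v)$ denotes the open neighborhood of $v$. A sequence $S=(v_1,\ldots,v_k)$ of distinct vertices of a graph $G$ without isolated vertices is a legal sequence if $N(v_i)\setminus \bigcup_{j=1}^{i-1} N(v_j)\neq\emptyset$ for every $i\in\{2,\ldots,k\}$, and a total dominating sequence if moreover $\{v_1,\ldots,v_k\}$ is a total dominating set of $G$. $\gamma_{\rm gr}^t(G)$ is the maximum length of a total dominating sequence of $G$. *)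

(* Defs.v *)
From mathcomp Require Import all_boot.
Set Implicit Arguments. Unset Strict Implicit. Unset Printing Implicit Defensive.

Definition nbhd (V : finType) (e : rel V) (v : V) : {set V} := [set u | e v u].

Definition deg (V : finType) (e : rel V) (v : V) : nat := #|nbhd e v|.

Definition support_vertex (V : finType) (e : rel V) (v : V) : Prop :=
  exists u, e v u /\ deg e u = 1.

(* The family \mathcal{T}: smallest family containing P_2 and closed under O_1.
   Membership is stated up to isomorphism: any labelled copy counts. *)
Inductive inFamT : forall (V : finType), rel V -> Prop :=
| famT_P2 (V : finType) (e : rel V) :
    #|V| = 2 -> (forall x y, e x y = (x != y)) -> inFamT e
| famT_O1 (V W : finType) (e : rel V) (e' : rel W) (f : V -> W) (v : V)
    (v1 v2 v3 : W) :
    inFamT e ->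
    support_vertex e v ->
    injective f ->
    (forall x, [/\ f x != v1, f x != v2 & f x != v3]) ->
    [/\ v1 != v2, v1 != v3 & v2 != v3] ->
    (forall w, [\/ w = v1, w = v2, w = v3 | exists x, w = f x]) ->
    symmetric e' ->
    (forall x y, e' (f x) (f y) = e x y) ->
    (forall w, e' v1 w = (w == f v) || (w == v2)) ->
    (forall w, e' v2 w = (w == v1) || (w == v3)) ->
    (forall w, e' v3 w = (w == v2)) ->
    inFamT e'.

Definition legal_seq (V : finType) (e : rel V) (s : seq V) : bool :=
  uniq s &&
  [forall i : 'I_(size s), (0 < i) ==>
     [exists u, e (tnth (in_tuple s) i) u && ~~ has (fun w => e w u) (take i s)]].

Definition total_dominating_seq (V : finType) (e : rel V) (s : seq V) : bool :=
  legal_seq e s && [forall x, has (fun w => e w x) s].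

(* Grundy total domination number: maximum length of a total dominating
   sequence (lengths are bounded by #|V| since the entries are distinct;
   the max is 0 if there is none). *)
Definition grundy_total (V : finType) (e : rel V) : nat :=
  \max_(k < #|V|.+1 | [exists s : k.-tuple V, total_dominating_seq e s]) k.

(* Main.v *)
Require Import Defs.
From mathcomp Require Import all_boot zify.
Set Implicit Arguments. Unset Strict Implicit. Unset Printing Implicit Defensive.

Definition pre (T : eqType) (s : seq T) (x : T) := take (index x s) s.

Lemma pre_cons (T : eqType) (c : T) s x :
  pre (c :: s) x = if c == x then [::] else c :: pre s x.
Proof. by rewrite /pre /=; case: (c == x). Qed.

Lemma mem_pre (T : eqType) (s : seq T) x y :
  (x \in pre s y) = (index x s < index y s).
Proof.
elim: s => [|c s IH] //; rewrite pre_cons /=.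
case: (c =P y) => [->|/eqP ncy] /=; first by case: (y == x).
rewrite in_cons IH; case: (c =P x) => [->|/eqP ncx] /=; first by rewrite eqxx.
by rewrite eq_sym (negbTE ncx).
Qed.

Lemma pre_nomem (T : eqType) (s : seq T) x : x \notin pre s x.
Proof. by rewrite mem_pre ltnn. Qed.

Lemma pre_total (T : eqType) (s : seq T) x y : x \in s -> y \in s -> x != y ->
  (x \in pre s y) || (y \in pre s x).
Proof.
move=> xs ys nxy; rewrite !mem_pre.
case: (ltngtP (index x s) (index y s)) => // H.
have : nth x s (index x s) = nth x s (index y s) by rewrite H.
by rewrite !nth_index // => E; rewrite E eqxx in nxy.
Qed.

Lemma pre_map (T1 T2 : eqType) (f : T1 -> T2) s x : injective f ->
  pre (map f s) (f x) = map f (pre s x).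
Proof.
move=> fi; elim: s => [|c s IH] //=; rewrite !pre_cons inj_eq //.
by case: (c == x) => //=; rewrite IH.
Qed.

Lemma pre_rcons_in (T : eqType) (s : seq T) x y : y \in s -> pre (rcons s x) y = pre s y.
Proof.
elim: s => [|c s IH] //= ys; rewrite !pre_cons.
case: (eqVneq c y) => // ncy; rewrite IH //.
by move: ys; rewrite in_cons eq_sym (negbTE ncy).
Qed.

Lemma pre_rcons_new (T : eqType) (s : seq T) x : x \notin s -> pre (rcons s x) x = s.
Proof.
elim: s => [|c s IH] /=; first by rewrite pre_cons eqxx.
rewrite in_cons negb_or => /andP [ncx xs]; rewrite pre_cons eq_sym (negbTE ncx) IH //.
Qed.

Definition LP (T : finType) (e : rel T) (s : seq T) :=
  uniq s /\ forall x, x \in s -> pre s x != [::] ->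
    exists u, e x u && ~~ has (fun w => e w u) (pre s x).

Lemma legalP (T : finType) (e : rel T) s : legal_seq e s <-> LP e s.
Proof.
rewrite /legal_seq /LP; split.
  case/andP=> us /forallP H; split => // x xs npre.
  have ix : index x s < size s by rewrite index_mem.
  have := H (Ordinal ix); rewrite /= (tnth_nth x) /= nth_index //.
  have -> : 0 < index x s.
    by move: npre; rewrite /pre lt0n; apply: contra => /eqP ->; rewrite take0.
  by case/existsP => u Hu; exists u.
case=> us H; rewrite us /=; apply/forallP => i; apply/implyP => i0.
have xs : tnth (in_tuple s) i \in s by apply: mem_tnth.
have E : index (tnth (in_tuple s) i) s = i by rewrite (tnth_nth (tnth (in_tuple s) i)) index_uniq.
have [|u Hu] := H _ xs.
  rewrite /pre E; apply/eqP => /(f_equal size); rewrite size_take ltn_ord.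
  by move=> E0; rewrite E0 in i0.
by apply/existsP; exists u; rewrite /pre E in Hu.
Qed.

Lemma legal_strong (T : finType) (e : rel T) s x : LP e s -> x \in s ->
  (exists y, e x y) -> exists u, e x u && ~~ has (fun w => e w u) (pre s x).
Proof.
case=> _ H xs [y exy]; case: (eqVneq (pre s x) [::]) => [->|]; last exact: H.
by exists y; rewrite exy.
Qed.

Lemma LP_rcons (T : finType) (e : rel T) s x : LP e s -> x \notin s ->
  (exists u, e x u && ~~ has (fun w => e w u) s) -> LP e (rcons s x).
Proof.
case=> us H xs [u Hu]; split; first by rewrite rcons_uniq xs.
move=> y; rewrite mem_rcons in_cons; case: (eqVneq y x) => [->|nyx] /= ys.
  by rewrite pre_rcons_new //; exists u.
by rewrite pre_rcons_in //; apply: H.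
Qed.

Lemma pre_pmap (T1 T2 : eqType) (h : T1 -> option T2) S w x :
  h w = Some x -> (forall c, c \in S -> h c = Some x -> c = w) ->
  pre (pmap h S) x = pmap h (pre S w).
Proof.
move=> hw; elim: S => [|c S IH] // Hinj.
case: (c =P w) => [->|/eqP ncw]; first by rewrite /= hw /= !pre_cons !eqxx.
rewrite /= pre_cons (negbTE ncw).
have IH' : pre (pmap h S) x = pmap h (pre S w).
  by apply: IH => c' c'S; apply: Hinj; rewrite in_cons c'S orbT.
case E: (h c) => [y|] /=; rewrite E /=; last exact: IH'.
rewrite pre_cons IH'; case: (y =P x) => [yx|] //.
by move: ncw; rewrite (Hinj c) ?eqxx // ?mem_head // E yx.
Qed.

Lemma pmapP (T1 T2 : eqType) (h : T1 -> option T2) S y :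
  reflect (exists2 w, w \in S & h w = Some y) (y \in pmap h S).
Proof.
rewrite mem_pmap; apply: (iffP mapP) => [[w ws E]|[w ws E]]; exists w => //.
Qed.

Lemma LP_pmap (W V : finType) (e : rel V) (h : W -> option V) (S : seq W) :
  uniq S ->
  (forall a c x, a \in S -> c \in S -> h a = Some x -> h c = Some x -> a = c) ->
  (forall w x, w \in S -> h w = Some x -> exists u, e x u /\
      forall w' y, w' \in pre S w -> h w' = Some y -> ~~ e y u) ->
  LP e (pmap h S).
Proof.
move=> uS Hinj Hw; split.
  elim: S uS Hinj {Hw} => [|c S IH] //= /andP [cS uS] Hinj.
  have IH' : uniq (pmap h S).
    by apply: IH uS _ => a c' x aS cS'; apply: Hinj; rewrite in_cons ?aS ?cS' orbT.
  case E: (h c) => [y|] //=; rewrite IH' andbT.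
  apply/negP => /pmapP [w wS Ew].
  have := Hinj w c y _ (mem_head _ _) Ew E.
  rewrite in_cons wS orbT => /(_ isT).
  by move=> wc; rewrite -wc wS in cS.
move=> x /pmapP [w wS Ew] _.
have [u [eu Hu]] := Hw w x wS Ew; exists u; rewrite eu /=.
rewrite (pre_pmap (S := S) Ew); last by move=> c cS Ec; apply: (Hinj c w x).
apply/hasP => [[y /pmapP [w' w'S Ew'] ey]].
by have := Hu w' y w'S Ew'; rewrite ey.
Qed.
Lemma grundy_eq (V : finType) (e : rel V) m :
  (exists s, total_dominating_seq e s /\ size s = m) ->
  (forall s, total_dominating_seq e s -> size s <= m) -> grundy_total e = m.
Proof.
move=> [s [Hs <-]] Hle; apply/eqP; rewrite eqn_leq; apply/andP; split.
  apply/bigmax_leqP => i /existsP [t Ht].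
  by rewrite -(size_tuple t); apply: Hle.
have us : uniq s by case/andP: Hs => /andP [].
have lt : size s < #|V|.+1.
  by rewrite ltnS -(card_uniqP us); apply: max_card.
rewrite /grundy_total.
have := @leq_bigmax_cond _ (fun k : 'I_#|V|.+1 => [exists t : k.-tuple V, total_dominating_seq e t])
   (fun k => nat_of_ord k) (Ordinal lt).
apply; apply/existsP; exists (in_tuple s) => //.
Qed.

Lemma TD_nbr (V : finType) (e : rel V) s : symmetric e -> total_dominating_seq e s ->
  forall x, exists y, e x y.
Proof.
move=> sym /andP [_ /forallP H] x; have /hasP [y _ eyx] := H x.
by exists y; rewrite sym.
Qed.

Definition TD (V : finType) (e : rel V) s := total_dominating_seq e s.

Lemma TDP (V : finType) (e : rel V) s :
  TD e s <-> LP e s /\ forall x, has (fun w => e w x) s.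
Proof.
rewrite /TD /total_dominating_seq; split.
  by case/andP => /legalP H /forallP H2.
by case=> /legalP -> H2; apply/forallP.
Qed.

Definition Inv (V : finType) (e : rel V) := irreflexive e /\ symmetric e /\
  exists m, 3 * m = 2 * (#|V| + 1) /\ (exists s, TD e s /\ size s = m) /\
     (forall s, TD e s -> size s <= m).

Lemma base (V : finType) (e : rel V) :
  #|V| = 2 -> (forall x y, e x y = (x != y)) -> Inv e.
Proof.
move=> cV ee; split; first by move=> x; rewrite ee eqxx.
split; first by move=> x y; rewrite !ee eq_sym.
exists 2; split; first by rewrite cV.
split; last first.
  move=> s /TDP [[us _] _]; by rewrite -cV -(card_uniqP us) max_card.
have sz : size (enum V) = 2 by rewrite -cardE.
have ue := enum_uniq V.
have me : forall x, x \in enum V by move=> x; rewrite mem_enum.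
case E: (enum V) sz ue me => [|a [|b [|]]] // _ uab mab.
have nab : a != b by move: uab; rewrite /= inE andbT.
exists [:: a; b]; split => //; apply/TDP; split.
  split => // x; rewrite !inE => /orP [] /eqP ->.
    by rewrite pre_cons eqxx.
  move=> _; exists a; rewrite pre_cons (negbTE nab) pre_cons eqxx /= ee eq_sym nab /=.
  by rewrite ee eqxx.
move=> x; have := mab x; rewrite !inE => /orP [] /eqP ->; rewrite /= !ee.
  by rewrite eq_sym nab orbT.
by rewrite nab.
Qed.

Lemma step (V W : finType) (e : rel V) (e' : rel W) (f : V -> W) (v : V)
    (v1 v2 v3 : W) :
    Inv e ->
    support_vertex e v ->
    injective f ->
    (forall x, [/\ f x != v1, f x != v2 & f x != v3]) ->
    [/\ v1 != v2, v1 != v3 & v2 != v3] ->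
    (forall w, [\/ w = v1, w = v2, w = v3 | exists x, w = f x]) ->
    symmetric e' ->
    (forall x y, e' (f x) (f y) = e x y) ->
    (forall w, e' v1 w = (w == f v) || (w == v2)) ->
    (forall w, e' v2 w = (w == v1) || (w == v3)) ->
    (forall w, e' v3 w = (w == v2)) ->
    Inv e'.
Proof.
move=> [irr [sym [m [Hm [[s0 [TD0 sz0]] Hle]]]]] [l [evl degl]] finj fnv
  [n12 n13 n23] cover sym' ef e1 e2 e3.
have lnb : forall z, e l z -> z = v.
  move=> z elz; have /cards1P [y Ey] : #|nbhd e l| == 1 by move: degl; rewrite /deg => ->.
  have : v \in nbhd e l by rewrite inE sym.
  have : z \in nbhd e l by rewrite inE.
  by rewrite Ey !inE => /eqP -> /eqP ->.
have lv : l != v by apply/eqP => E; move: evl; rewrite E irr.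
have e1f : forall x, e' v1 (f x) = (x == v).
  by move=> x; rewrite e1 inj_eq //; case: (fnv x) => _ /negbTE -> _; rewrite orbF.
have e2f : forall x, e' v2 (f x) = false.
  by move=> x; rewrite e2; case: (fnv x) => /negbTE -> _ /negbTE ->.
have e3f : forall x, e' v3 (f x) = false.
  by move=> x; rewrite e3; case: (fnv x) => _ /negbTE -> _.
have irr' : irreflexive e'.
  move=> w; case: (cover w) => [->|->|->|[x ->]].
  - by rewrite e1 (negbTE n12) eq_sym; case: (fnv v) => /negbTE ->.
  - by rewrite e2 eq_sym (negbTE n12) (negbTE n23).
  - by rewrite e3 eq_sym (negbTE n23).
  - by rewrite ef irr.
have cW : #|W| = #|V| + 3.
  have cf : #|[pred w | w \in codom f]| = #|V| by rewrite -(card_codom finj); apply: eq_card.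
  rewrite -(cardC [pred w | w \in codom f]) cf; congr (_ + _).
  have -> : #|[predC [pred w | w \in codom f]]| = #|[:: v1; v2; v3]|.
    apply: eq_card => w; rewrite !inE; case: (cover w) => [->|->|->|[x ->]].
    - rewrite eqxx /=; apply/codomP => [[x E]]; case: (fnv x) => /eqP; by rewrite E.
    - rewrite eqxx orbT /=; apply/codomP => [[x E]]; case: (fnv x) => _ /eqP; by rewrite E.
    - rewrite eqxx !orbT /=; apply/codomP => [[x E]]; case: (fnv x) => _ _ /eqP; by rewrite E.
    - by rewrite codom_f /=; case: (fnv x) => /negbTE -> /negbTE -> /negbTE ->.
  apply/card_uniqP; by rewrite /= !inE negb_or n12 n13 n23.
have hm : forall (L : seq V) u,
    has (fun w => e' w (f u)) (map f L) = has (fun w => e w u) L.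
  by move=> L u; rewrite has_map; apply: eq_has => w /=; rewrite ef.
split => //; split => //; exists m.+2; split.
  by rewrite cW; lia.
have nbr : forall x, exists y, e x y by apply: TD_nbr TD0.
split.
  move/TDP: TD0 => [[us0 L0] D0].
  exists [:: v2, v3 & map f s0]; split; last by rewrite /= size_map sz0.
  have v2m : v2 \notin map f s0.
    by apply/mapP => [[x _ E]]; case: (fnv x) => _ /eqP; rewrite E.
  have v3m : v3 \notin map f s0.
    by apply/mapP => [[x _ E]]; case: (fnv x) => _ _ /eqP; rewrite E.
  apply/TDP; split; first split.
  - by rewrite /= !inE negb_or n23 v2m v3m (map_inj_uniq finj) us0.
  - move=> x; rewrite !inE => /orP [/eqP ->|/orP [/eqP ->|]].
    + by rewrite pre_cons eqxx.
    + move=> _; exists v2; rewrite pre_cons (negbTE n23) pre_cons eqxx /= e3 eqxx /=.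
      by rewrite orbF e2 (eq_sym v2 v1) (negbTE n12) (negbTE n23).
    + move=> /mapP [y ys ->] _.
      have [u /andP [eyu hu]] := legal_strong (conj us0 L0) ys (nbr y).
      exists (f u); rewrite ef eyu /=.
      case: (fnv y) => _ /negbTE n2 /negbTE n3.
      by rewrite pre_cons eq_sym n2 pre_cons eq_sym n3 pre_map //= e2f e3f hm.
  - move=> w; case: (cover w) => [->|->|->|[x ->]].
    + by rewrite /= e2 eqxx.
    + by rewrite /= e3 eqxx orbT.
    + by rewrite /= e2 eqxx orbT.
    + have /hasP [y ys eyx] := D0 x.
      rewrite /= e2f e3f /=; apply/hasP; exists (f y); first by apply: map_f.
      by rewrite ef.
move=> S /TDP [[uS LS] DS].
have nbr' : forall w, exists z, e' w z.
  move=> w; have /hasP [z _ ezw] := DS w; by exists z; rewrite sym'.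
have LS' : LP e' S by [].
pose b := (v1 \in S) && (v2 \in S) && (v3 \in S).
have F1 : b -> ~~ has (fun w => e' w (f v)) (pre S v1).
  case/andP => /andP [i1 i2] i3.
  have [u /andP [e3u hu]] := legal_strong LS' i3 (nbr' v3).
  move: e3u; rewrite e3 => /eqP Eu; subst u.
  have n1 : v1 \notin pre S v3.
    by apply: contra hu => H; apply/hasP; exists v1; rewrite // e1 eqxx orbT.
  have [u /andP [e1u hu1]] := legal_strong LS' i1 (nbr' v1).
  move: e1u; rewrite e1 => /orP [/eqP Eu|/eqP Eu]; subst u => //.
  have n3 : v3 \notin pre S v1.
    by apply: contra hu1 => H; apply/hasP; exists v3; rewrite // e3 eqxx.
  by have := pre_total i1 i3 n13; rewrite (negbTE n1) (negbTE n3).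
have F2 : b -> f l \notin S.
  move=> hb; have F1b := F1 hb; apply/negP => fl.
  have i1 : v1 \in S by case/andP: hb => /andP [].
  have nfl : f l != v1 by case: (fnv l).
  case/orP: (pre_total fl i1 nfl) => H.
    by move: F1b; rewrite (_ : has _ _ = true) //; apply/hasP; exists (f l); rewrite //= ef sym.
  have [u /andP [eu hu]] := legal_strong LS' fl (nbr' (f l)).
  case: (cover u) eu hu => [->|->|->|[z ->]].
  - by rewrite sym' e1f (negbTE lv).
  - by rewrite sym' e2f.
  - by rewrite sym' e3f.
  - rewrite ef => /lnb -> hu.
    by move: hu; rewrite (_ : has _ _ = true) //; apply/hasP; exists v1; rewrite //= e1f.
pose h := fun w : W => if b && (w == v1) then Some l else [pick x | f x == w].
have hf : forall x, h (f x) = Some x.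
  move=> x; rewrite /h; case: (fnv x) => /negbTE -> _ _; rewrite andbF.
  case: pickP => [y /eqP /finj -> //|H]; by have := H x; rewrite eqxx.
have hnone : forall w, (forall x, f x != w) -> [pick x | f x == w] = None.
  move=> w H; case: pickP => [y /eqP E|//]; by have := H y; rewrite E eqxx.
have hspec : forall w x, h w = Some x -> w = f x \/ [/\ b, w = v1 & x = l].
  move=> w x; rewrite /h; case: ifP => [/andP [hb /eqP ->] [<-]|_]; first by right.
  by case: pickP => [y /eqP <- [->]|//]; left.
have h1 : h v1 = if b then Some l else None.
  rewrite /h eqxx andbT; case: ifP => // _; apply: hnone => x; by case: (fnv x).
have h2 : h v2 = None.
  rewrite /h eq_sym (negbTE n12) andbF; apply: hnone => x; by case: (fnv x).
have h3 : h v3 = None.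
  rewrite /h eq_sym (negbTE n13) andbF; apply: hnone => x; by case: (fnv x).
have Lp : LP e (pmap h S).
  apply: LP_pmap => //.
    move=> a c x aS cS /hspec Ha /hspec Hc.
    case: Ha Hc aS cS => [->|[hb -> ->]] [->|[hb' -> E]] // aS cS.
      by subst x; move: (F2 hb'); rewrite aS.
    by move: (F2 hb); rewrite cS.
  move=> w x wS /hspec [Ew|[hb -> ->]]; last first.
    exists v; rewrite sym evl; split => // w' y w'S /hspec [Ew'|[_ Ew' _]].
      apply/negP => eyv; move: (F1 hb); rewrite (_ : has _ _ = true) //.
      by apply/hasP; exists w' => //=; rewrite Ew' ef.
    by move: w'S; rewrite Ew' (negbTE (pre_nomem _ _)).
  subst w.
  have [U /andP [eU hU]] := legal_strong LS' wS (nbr' (f x)).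
  case: (cover U) eU hU => [->|->|->|[u ->]].
  - rewrite sym' e1f => /eqP -> hU; exists l; split => // w' y w'S /hspec [Ew'|[_ _ ->]].
      apply/negP => eyl; move: w'S; rewrite Ew' (lnb y) ?(negbTE (pre_nomem _ _)) //.
      by rewrite sym.
    by rewrite irr.
  - by rewrite sym' e2f.
  - by rewrite sym' e3f.
  rewrite ef => exu hU; exists u; split => // w' y w'S /hspec [Ew'|[_ Ew' ->]].
    apply/negP => eyu; move: hU; rewrite (_ : has _ _ = true) //.
    by apply/hasP; exists w' => //=; rewrite Ew' ef.
  apply/negP => /lnb Eu; subst u; move: hU; rewrite (_ : has _ _ = true) //.
  by apply/hasP; exists w' => //=; rewrite Ew' e1f.
pose s := pmap h S.
have dom : forall z, z != v -> has (fun y => e y z) s.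
  move=> z nzv; have /hasP [w wS ewz] := DS (f z).
  case: (cover w) wS ewz => [->|->|->|[y ->]] wS.
  - by rewrite e1f (negbTE nzv).
  - by rewrite e2f.
  - by rewrite e3f.
  rewrite ef => eyz; apply/hasP; exists y => //; apply/pmapP; exists (f y) => //; exact: hf.
pose sf := if has (fun y => e y v) s then s else rcons s l.
have TDf : TD e sf.
  apply/TDP; rewrite /sf; case: ifP => Hv.
    split; first exact: Lp.
    move=> z; case: (z =P v) => [->//|/eqP]; exact: dom.
  split.
    apply: LP_rcons => //.
      by apply: contraFN Hv => ls; apply/hasP; exists l; rewrite // sym.
    by exists v; rewrite sym evl Hv.
  move=> z; rewrite has_rcons; case: (z =P v) => [->|/eqP nzv].
    by rewrite sym evl.
  by rewrite dom // orbT.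
have szf : size s <= size sf by rewrite /sf; case: ifP => _ //; rewrite size_rcons.
have := Hle _ TDf; move: szf; rewrite /s size_pmap.
have : count (predC (fun w => h w)) S <= 2.
  pose L := if b then [:: v2; v3] else if v1 \notin S then [:: v2; v3]
            else if v2 \notin S then [:: v1; v3] else [:: v1; v2].
  rewrite -size_filter; apply: (@leq_trans (size L)); last first.
    by rewrite /L; case: ifP => //; case: ifP => //; case: ifP.
  apply: uniq_leq_size; first exact: filter_uniq.
  move=> w; rewrite mem_filter /= => /andP [hw wS].
  case: (cover w) hw wS => [->|->|->|[y ->]]; last by rewrite hf.
  - rewrite h1 /L; case Hb: b => //= _ i1; rewrite i1 /=.
    case: ifP => _; by rewrite !inE eqxx ?orbT.
  - rewrite /L => _ i2; case: ifP => _; first by rewrite !inE eqxx.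
    case: ifP => _; first by rewrite !inE eqxx.
    by rewrite i2 /= !inE eqxx orbT.
  - rewrite /L => _ i3; case: ifP => Hb; first by rewrite !inE eqxx orbT.
    case: ifP => n1; first by rewrite !inE eqxx orbT.
    case: ifP => n2; first by rewrite !inE eqxx orbT.
    by move: Hb n1 n2; rewrite /b i3 andbT; case: (v1 \in S); case: (v2 \in S).
have := count_predC (fun w => h w) S.
move=> E C2 C1 C3; rewrite -E.
by apply: leq_trans (leq_add (leq_trans C1 C3) C2) _; rewrite addn2.
Qed.

Lemma famInv (V : finType) (e : rel V) : inFamT e -> Inv e.
Proof.
elim => {V e} [V e cV ee|V W e e' f v v1 v2 v3 _ IH sv fi fn nd cov sy ef e1 e2 e3].
  exact: base.
exact: (step IH sv fi fn nd cov sy ef e1 e2 e3).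
Qed.

Theorem mainTheorem10 (V : finType) (e : rel V) :
  inFamT e -> 3 * grundy_total e = 2 * (#|V| + 1).
Proof.
move=> /famInv [_ [_ [m [Hm [Hex Hle]]]]].
by rewrite (grundy_eq Hex Hle).
Qed.
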